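(* Let $E$ be a finite set and $\underline I=(I_\omega)_{\omega\in E}$ a family of non-empty finite sets, and let $\mathrm{CC}(\underline I)$ be the set of causally complete spaces of input histories $\Theta$ with $E^\Theta=E$ and $I^\Theta_\omega=I_\omega$ for all $\omega\in E$. Then for all $\Theta,\Theta'\in\mathrm{CC}(\underline I)$ the meet $\Theta\wedge\Theta'$ lies in $\mathrm{CC}(\underline I)$; and if $|E|\ge 2$, there exist $\Theta,\Theta'\in\mathrm{CC}(\underline I)$ whose join $\Theta\vee\Theta'$ does not lie in $\mathrm{CC}(\underline I)$.
   Context: Partial functions on $\underline I$: $f$ with $\mathrm{dom}(f)\subseteq E$, $f(\omega)\in I_\omega$, ordered by restriction. Compatible = agreeing on common domain; compatible $\mathcal F$ has join $\bigvee\mathcal F$ (union). $\Theta$ is $\vee$-prime if for compatible $\mathcal F\subseteq\Theta$ with $\bigvee\mathcal F\in\Theta$ we have $\bigvee\mathcal F\in\mathcal F$. A space of input histories is a finite $\vee$-prime set of partial functions; $E^\Theta=\bigcup_{h\in\Theta}\mathrm{dom}(h)$, $I^\Theta_\omega=\{h(\omega):h\in\Theta,\omega\in\mathrm{dom}(h)\}$, $\mathrm{Ext}(\Theta)=\{\bigvee\mathcal F:\emptyset\ne\mathcal F\subseteq\Theta\text{ compatible}\}$. Free-choice: maximal elements of $\mathrm{Ext}(\Theta)$ are exactly the total functions in $\prod_{\omega\in E^\Theta}I^\Theta_\omega$. $\mathrm{tips}_\Theta(h)=\mathrm{dom}(h)\setminus\bigcup\{\mathrm{dom}(k):k\in\mathrm{Ext}(\Theta),k<h\}$.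 Causally complete: free-choice and $|\mathrm{tips}_\Theta(h)|=1$ for all $h\in\Theta$. For a set $W$, $\mathrm{Prime}(W)=\{w\in W:\text{for all compatible }\mathcal F\subseteq W,\ w=\bigvee\mathcal F\Rightarrow w\in\mathcal F\}$. Meet and join of spaces: $\Theta\wedge\Theta'=\mathrm{Prime}(\mathrm{Ext}(\Theta)\cup\mathrm{Ext}(\Theta'))$, $\Theta\vee\Theta'=\mathrm{Prime}(\mathrm{Ext}(\Theta)\cap\mathrm{Ext}(\Theta'))$. *)

(* Defs.v *)
From mathcomp Require Import all_boot.
Set Implicit Arguments.
Unset Strict Implicit.
Unset Printing Implicit Defensive.

Section PartialFunctions.
Variables (E : finType) (I : E -> finType).

Definition pfun := {dffun forall w : E, option (I w)}.

Definition dom (f : pfun) : {set E} := [set w | f w != None].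

Definition pf_le (f g : pfun) : bool :=
  [forall w, (f w != None) ==> (g w == f w)].
Definition pf_lt (f g : pfun) : bool := pf_le f g && (f != g).

Definition compatible (F : {set pfun}) : bool :=
  [forall f in F, forall g in F, forall w,
     ((f w != None) && (g w != None)) ==> (f w == g w)].

(* join (union) of a family; meaningful for compatible families *)
Definition pjoin (F : {set pfun}) : pfun :=
  [ffun w => if [pick f in F | f w != None] is Some f then f w else None].

Definition vee_prime (Th : {set pfun}) : Prop :=
  forall F : {set pfun}, F \subset Th -> compatible F ->
    pjoin F \in Th -> pjoin F \in F.

Definition EOf (Th : {set pfun}) : {set E} := \bigcup_(h in Th) dom h.
Definition IOf (Th : {set pfun}) (w : E) : {set I w} :=
  [set x | [exists h in Th, h w == Some x]].

Definition Ext (Th : {set pfun}) : {set pfun} :=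
  [set pjoin F | F in [set F in powerset Th | (F != set0) && compatible F]].

Definition maximal_in (W : {set pfun}) (k : pfun) : Prop :=
  k \in W /\ (forall k', k' \in W -> pf_le k k' -> k' = k).

Definition total_in_prod (Th : {set pfun}) (k : pfun) : Prop :=
  dom k = EOf Th /\
  (forall w, w \in EOf Th -> exists2 x, k w = Some x & x \in IOf Th w).

Definition free_choice (Th : {set pfun}) : Prop :=
  forall k : pfun, maximal_in (Ext Th) k <-> total_in_prod Th k.

Definition tips (Th : {set pfun}) (h : pfun) : {set E} :=
  dom h :\: \bigcup_(k in Ext Th | pf_lt k h) dom k.

Definition causally_complete (Th : {set pfun}) : Prop :=
  free_choice Th /\ (forall h, h \in Th -> #|tips Th h| = 1).

(* space of input histories (finite automatically: a finset) *)
Definition space_of_input_histories (Th : {set pfun}) : Prop := vee_prime Th.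

Definition Prime (W : {set pfun}) : {set pfun} :=
  [set w in W | [forall F in powerset W, compatible F ==> (w == pjoin F) ==> (w \in F)]].

Definition smeet (Th Th' : {set pfun}) : {set pfun} := Prime (Ext Th :|: Ext Th').
Definition sjoin (Th Th' : {set pfun}) : {set pfun} := Prime (Ext Th :&: Ext Th').

Definition CC (Th : {set pfun}) : Prop :=
  space_of_input_histories Th /\ causally_complete Th /\
  EOf Th = [set: E] /\ (forall w, IOf Th w = [set: I w]).

End PartialFunctions.

(* Main.v *)
Require Import Defs.
From mathcomp Require Import all_boot.
Set Implicit Arguments. Unset Strict Implicit. Unset Printing Implicit Defensive.

Section Proof.
Variables (E : finType) (I : E -> finType).
Local Notation pf := (pfun I).
Implicit Types (f g h k t : pf) (F G W Th : {set pf}).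

Lemma inDom f w : (w \in dom f) = (f w != None).
Proof. by rewrite inE. Qed.

Lemma pf_leP f g : reflect (forall w, f w != None -> g w = f w) (pf_le f g).
Proof.
apply: (iffP forallP) => H w.
  by move=> fw; move/implyP: (H w) => /(_ fw) /eqP.
by apply/implyP => fw; rewrite (H w fw).
Qed.

Lemma pf_leE f g w : pf_le f g -> f w != None -> g w = f w.
Proof. by move/pf_leP; apply. Qed.

Lemma pf_le_refl f : pf_le f f.
Proof. by apply/pf_leP. Qed.

Lemma pf_le_trans f g h : pf_le f g -> pf_le g h -> pf_le f h.
Proof.
move=> fg gh; apply/pf_leP => w fw.
have gw := pf_leE fg fw.
by rewrite (pf_leE gh) gw.
Qed.

Lemma le_eq f g : pf_le f g -> (forall w, g w != None -> f w != None) -> f = g.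
Proof.
move=> fg H; apply/ffunP => w.
case: (boolP (f w != None)) => fw; first by rewrite (pf_leE fg fw).
case: (boolP (g w != None)) => gw; first by rewrite (H w gw) in fw.
by move: fw gw; rewrite !negbK => /eqP -> /eqP ->.
Qed.

Lemma pf_le_anti f g : pf_le f g -> pf_le g f -> f = g.
Proof.
move=> fg gf; apply: le_eq fg _ => w gw.
by rewrite (pf_leE gf gw).
Qed.

Lemma lt_le_trans f g h : pf_le f g -> pf_lt g h -> pf_lt f h.
Proof.
move=> fg /andP[gh ngh]; rewrite /pf_lt (pf_le_trans fg gh) /=.
apply/eqP => e; rewrite e in fg.
by rewrite (pf_le_anti gh fg) eqxx in ngh.
Qed.

Lemma pjoinP F w : pjoin F w != None ->
  exists2 f, f \in F & (f w != None) && (pjoin F w == f w).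
Proof.
rewrite /pjoin ffunE; case: pickP => [f /andP[fF fw] _ |_]; last by rewrite eqxx.
by exists f => //; rewrite fw eqxx.
Qed.

Lemma pjoin_some F f w : f \in F -> f w != None -> pjoin F w != None.
Proof.
move=> fF fw; rewrite /pjoin ffunE; case: pickP => [g /andP[_ gw] // | H].
by have := H f; rewrite /= fF fw.
Qed.

Lemma pjoin_none F w : (forall f, f \in F -> f w = None) -> pjoin F w = None.
Proof.
move=> H; rewrite /pjoin ffunE; case: pickP => [f /andP[fF fw]|//].
by move: fw; rewrite H.
Qed.

Lemma compatP F : reflect (forall f g w, f \in F -> g \in F -> f w != None ->
   g w != None -> f w = g w) (compatible F).
Proof.
apply: (iffP idP) => [H f g w fF gF fw gw | H].
  move/forall_inP: H => /(_ f fF) /forall_inP /(_ g gF) /forallP /(_ w) /implyP.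
  by rewrite fw gw => /(_ isT) /eqP.
apply/forall_inP => f fF; apply/forall_inP => g gF; apply/forallP => w.
by apply/implyP => /andP[fw gw]; apply/eqP; apply: H.
Qed.

Lemma compat_le F f : compatible F -> f \in F -> pf_le f (pjoin F).
Proof.
move/compatP=> C fF; apply/pf_leP => w fw.
have : pjoin F w != None by apply: pjoin_some fF fw.
case/pjoinP => g gF /andP[gw /eqP ->].
exact: C.
Qed.

Lemma le_compat F t : (forall f, f \in F -> pf_le f t) -> compatible F.
Proof.
move=> H; apply/compatP => f g w fF gF fw gw.
by rewrite -(pf_leE (H f fF) fw) -(pf_leE (H g gF) gw).
Qed.

Lemma pjoin_eq F t : (forall f, f \in F -> pf_le f t) ->
  (forall w, t w != None -> exists2 f, f \in F & f w != None) -> pjoin F = t.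
Proof.
move=> H1 H2; apply/ffunP => w.
case: (boolP (t w != None)) => tw.
  have [f fF fw] := H2 w tw.
  have pj : pjoin F w != None := pjoin_some fF fw.
  case/pjoinP: pj => g gF /andP[gw /eqP ->].
  by rewrite (pf_leE (H1 g gF) gw).
rewrite pjoin_none; first by move: tw; rewrite negbK => /eqP.
move=> f fF; apply/eqP; apply: contraNT tw => fw.
by rewrite (pf_leE (H1 f fF) fw).
Qed.

Lemma ExtI Th F : F \subset Th -> F != set0 -> compatible F -> pjoin F \in Ext Th.
Proof. move=> sF nF cF; apply/imsetP; exists F => //; by rewrite inE powersetE sF nF cF. Qed.

Lemma ExtE Th k : k \in Ext Th ->
  exists2 F : {set pf}, [/\ F \subset Th, F != set0 & compatible F] & k = pjoin F.
Proof.
rewrite /Ext => /imsetP [F]; rewrite inE powersetE => /andP[sF /andP[nF cF]] ->.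
by exists F.
Qed.

Lemma pjoin1 f : pjoin [set f] = f.
Proof.
apply: pjoin_eq => [g|w fw]; first by rewrite inE => /eqP ->; exact: pf_le_refl.
by exists f; rewrite ?inE.
Qed.

Lemma ExtS Th f : f \in Th -> f \in Ext Th.
Proof.
move=> fTh; rewrite -(pjoin1 f); apply: ExtI.
- by rewrite sub1set.
- by apply/set0Pn; exists f; rewrite inE.
- by apply: (@le_compat _ f) => g; rewrite inE => /eqP ->; exact: pf_le_refl.
Qed.

Lemma PrimeP W w : reflect (w \in W /\ forall F, F \subset W -> compatible F ->
   w = pjoin F -> w \in F) (w \in Prime W).
Proof.
rewrite inE; apply: (iffP andP) => [[wW /forall_inP H]|[wW H]]; split=> //.
  move=> F sF cF ew; move: (H F); rewrite powersetE => /(_ sF) /implyP /(_ cF).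
  by move/implyP; apply; apply/eqP.
apply/forall_inP => F; rewrite powersetE => sF; apply/implyP => cF.
by apply/implyP => /eqP; apply: H.
Qed.

Lemma Prime_vee W : vee_prime (Prime W).
Proof.
move=> F sF cF /PrimeP [_ H]; apply: H => //.
by apply: subset_trans sF _; apply/subsetP => x /PrimeP[].
Qed.

Lemma le_dom f g : pf_le f g -> dom f \subset dom g.
Proof.
move=> fg; apply/subsetP => w; rewrite !inDom => fw.
by rewrite (pf_leE fg fw).
Qed.

Lemma prime_below W w y : w \in W -> w y != None ->
  exists2 p, p \in Prime W & pf_le p w && (p y != None).
Proof.
move: {2}#|dom w|.+1 (ltnSn #|dom w|) => n; elim: n w => // n IH w.
rewrite ltnS => hn wW wy.
case: (boolP (w \in Prime W)) => wP; first by exists w; rewrite ?pf_le_refl ?wy.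
move: wP; rewrite inE wW /= negb_forall => /existsP [F].
rewrite negb_imply powersetE => /andP[sF]; rewrite negb_imply => /andP[cF].
rewrite negb_imply => /andP[/eqP ew wF].
have wy' := wy; rewrite ew in wy'.
case/pjoinP: wy' => f fF /andP[fy _].
have fw : pf_le f w by rewrite ew; apply: compat_le.
have nfw : f != w by apply: contraNneq wF => <-.
have lt : #|dom f| < #|dom w|.
  apply: proper_card; rewrite properEneq le_dom // andbT.
  apply: contra nfw => /eqP e; apply/eqP; apply: le_eq fw _ => v.
  by rewrite -!inDom e.
have [p pP /andP[pf py]] := IH f (leq_trans lt hn) (subsetP sF f fF) fy.
by exists p => //; rewrite (pf_le_trans pf fw) py.
Qed.

Lemma Ext_Prime W t y : t \in W -> t y != None -> t \in Ext (Prime W).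
Proof.
move=> tW ty.
set F := [set p in Prime W | pf_le p t].
have e : pjoin F = t.
  apply: pjoin_eq => [p|w tw]; first by rewrite inE => /andP[].
  have [p pP /andP[pt pw]] := prime_below tW tw.
  by exists p => //; rewrite inE pP pt.
rewrite -e; apply: ExtI.
- by apply/subsetP => p; rewrite inE => /andP[].
- have [p pP /andP[pt pw]] := prime_below tW ty.
  by apply/set0Pn; exists p; rewrite inE pP pt.
- by apply: (@le_compat _ t) => p; rewrite inE => /andP[].
Qed.

Variable d : forall w, I w.

Definition ext (k : pf) : pf :=
  @finfun E (fun w => option (I w)) (fun w => if k w is Some x then Some x else Some (d w)).

Lemma ext_total k w : ext k w != None.
Proof. by rewrite ffunE; case: (k w). Qed.

Lemma ext_le k : pf_le k (ext k).
Proof. by apply/pf_leP => w; rewrite ffunE; case: (k w). Qed.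

Definition upd (k : pf) (w0 : E) (x : I w0) : pf :=
  @finfun E (fun w => option (I w)) (fun w =>
    match w0 =P w with ReflectT e => Some (eq_rect w0 I x w e) | ReflectF _ => k w end).

Lemma upd_at k w0 (x : I w0) : upd k x w0 = Some x.
Proof.
rewrite ffunE; case: (w0 =P w0) => [e|//].
by rewrite (eq_axiomK e).
Qed.

Lemma upd_total k w0 (x : I w0) : (forall w, k w != None) -> forall w, upd k x w != None.
Proof. by move=> tk w; rewrite ffunE; case: (w0 =P w). Qed.

Definition restr (k : pf) (A : {set E}) : pf :=
  @finfun E (fun w => option (I w)) (fun w => if w \in A then k w else None).

Lemma restr_le k (A : {set E}) : pf_le (restr k A) k.
Proof. by apply/pf_leP => w; rewrite ffunE; case: ifP. Qed.

Lemma restr_at k (A : {set E}) w : w \in A -> restr k A w = k w.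
Proof. by move=> wA; rewrite ffunE wA. Qed.

Lemma dom_restr k (A : {set E}) : A \subset dom k -> dom (restr k A) = A.
Proof.
move=> sA; apply/setP => w; rewrite inDom ffunE.
by case: ifP => // wA; rewrite -inDom (subsetP sA).
Qed.

Lemma FC Th : EOf Th = setT -> (forall w, IOf Th w = setT) ->
  (forall t, (forall w, t w != None) -> t \in Ext Th) -> free_choice Th.
Proof.
move=> hE hI hT k; split.
- case=> kE kmax.
  have tot : forall w, k w != None.
    have e : ext k = k by apply: kmax; [apply: hT => w; exact: ext_total | exact: ext_le].
    by move=> w; rewrite -e ext_total.
  split; first by rewrite hE; apply/setP => w; rewrite inDom tot in_setT.
  move=> w _; case kw: (k w) => [x|]; first by exists x => //; rewrite hI in_setT.
  by have := tot w; rewrite kw.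
- case=> kE _.
  have tot w : k w != None by rewrite -inDom kE hE in_setT.
  split; first exact: hT.
  by move=> k' _ le; symmetry; apply: le_eq le _ => w _; exact: tot.
Qed.

Lemma total_Ext Th t : CC Th -> (forall w, t w != None) -> t \in Ext Th.
Proof.
case=> _ [[fc _] [hE hI]] tt.
have [_ H] := fc t; case: H => //; split.
  by rewrite hE; apply/setP => w; rewrite inDom tt in_setT.
move=> w _; case tw: (t w) => [x|]; first by exists x => //; rewrite hI in_setT.
by have := tt w; rewrite tw.
Qed.

Lemma CC_inhab Th : CC Th -> exists y : E, True.
Proof.
move=> C; have := total_Ext C (@ext_total (pjoin set0)).
case/ExtE => F [sF nF cF] _.
case/set0Pn: nF => g gF.
case: (pickP (@predT E)) => [y _|H]; first by exists y.
exfalso; case: C => vp _.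
have e : g = pjoin set0 by apply/ffunP => w; have := H w.
have c0 : compatible (set0 : {set pf}) by apply: (@le_compat _ g) => f; rewrite inE.
have := vp set0 (sub0set _) c0.
by rewrite -e (subsetP sF g gF) inE => /(_ isT).
Qed.

Lemma tips_meet Th W h : (forall k, k \in Ext Th -> k \in W) -> h \in Th ->
  #|tips Th h| = 1 -> h \in Prime W -> #|tips (Prime W) h| = 1.
Proof.
move=> sub hTh t1 hP.
have PW : Prime W \subset W by apply/subsetP => p /PrimeP[].
have sT : tips (Prime W) h \subset tips Th h.
  apply/subsetP => w; rewrite !in_setD => /andP[nw hw]; rewrite hw andbT.
  apply: contra nw => /bigcupP [k /andP[kE klt] kw].
  have [p pP /andP[pk pw]] := prime_below (sub k kE) (etrans (esym (inDom k w)) kw).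
  apply/bigcupP; exists p; last by rewrite inDom.
  by rewrite ExtS // (lt_le_trans pk klt).
have le1 : #|tips (Prime W) h| <= 1 by rewrite -t1 subset_leq_card.
have ge1 : 0 < #|tips (Prime W) h|.
  rewrite card_gt0; apply/negP => /eqP e0.
  set S := [set p in Prime W | pf_lt p h].
  have e : pjoin S = h.
    apply: pjoin_eq => [p|w hw]; first by rewrite inE => /andP[_ /andP[]].
    have : w \notin tips (Prime W) h by rewrite e0 inE.
    rewrite in_setD inDom hw andbT negbK => /bigcupP [k /andP[kE klt] kw].
    case/ExtE: kE => G [sG _ cG] ek.
    rewrite inDom ek in kw; case/pjoinP: kw => g gG /andP[gw _].
    exists g => //; rewrite inE (subsetP sG g gG) /=.
    by apply: lt_le_trans klt; rewrite ek; apply: compat_le.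
  case/PrimeP: hP => _ /(_ S) H.
  have : h \in S.
    apply: H; last by rewrite e.
    - by apply: subset_trans PW; apply/subsetP => p; rewrite inE => /andP[].
    - by apply: (@le_compat _ h) => p; rewrite inE => /andP[_ /andP[]].
  by rewrite inE /pf_lt eqxx !andbF.
by apply/eqP; rewrite eqn_leq le1 ge1.
Qed.

Lemma meet_CC Th Th' : CC Th -> CC Th' -> CC (smeet Th Th').
Proof.
move=> C C'.
rewrite /smeet; set W := Ext Th :|: Ext Th'.
have totW : forall t, (forall w, t w != None) -> t \in W.
  by move=> t tt; rewrite inE (total_Ext C tt).
have [y _] := CC_inhab C.
have totP : forall t, (forall w, t w != None) -> t \in Ext (Prime W).
  by move=> t tt; apply: (@Ext_Prime _ _ y); [exact: totW | exact: tt].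
have t0 := @ext_total (pjoin set0).
have hE : EOf (Prime W) = setT.
  apply/setP => w; rewrite in_setT.
  have [p pP /andP[_ pw]] := prime_below (totW _ t0) (t0 w).
  by apply/bigcupP; exists p => //; rewrite inDom.
have hI : forall w, IOf (Prime W) w = setT.
  move=> w; apply/setP => x; rewrite in_setT inE.
  have tt := upd_total x t0.
  have [p pP /andP[pt pw]] := prime_below (totW _ tt) (tt w).
  by apply/existsP; exists p; rewrite pP /= -(pf_leE pt pw) upd_at.
split; first exact: Prime_vee.
split; last by split.
split; first exact: FC.
move=> h hP.
have [hW hpr] := PrimeP _ _ hP.
move: hW; rewrite inE => /orP[] hE'.
- case/ExtE: (hE') => F [sF _ cF] eh.
  have hTh : h \in Th.
    apply: (subsetP sF); apply: hpr => //.
    by apply/subsetP => f fF; rewrite inE ExtS // (subsetP sF).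
  case: C => _ [[_ tp] _].
  apply: tips_meet hTh (tp h hTh) hP => k kE; by rewrite inE kE.
- case/ExtE: (hE') => F [sF _ cF] eh.
  have hTh : h \in Th'.
    apply: (subsetP sF); apply: hpr => //.
    by apply/subsetP => f fF; rewrite inE (ExtS (subsetP sF f fF)) orbT.
  case: C' => _ [[_ tp] _].
  apply: tips_meet hTh (tp h hTh) hP => k kE; by rewrite inE kE orbT.
Qed.

Definition ThD (D : E -> {set E}) : {set pf} := [set f : pf | [exists w, dom f == D w]].

Section DD.
Variable D : E -> {set E}.
Hypothesis D1 : forall w, w \in D w.
Hypothesis D2 : forall w w', w' \in D w -> D w' \subset D w.
Hypothesis D3 : forall w w', w' \in D w -> w \in D w' -> w = w'.
Variable y : E.

Lemma ExtD_dom g v : g \in Ext (ThD D) -> v \in dom g ->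
  exists w, (v \in D w) && (D w \subset dom g).
Proof.
case/ExtE => G [sG _ cG] ->; rewrite inDom => /pjoinP [g' gG /andP[gv _]].
move: (subsetP sG g' gG); rewrite inE => /existsP [w /eqP dw].
exists w; rewrite -dw inDom gv /=.
by apply: le_dom; apply: compat_le.
Qed.

Lemma CC_D : CC (ThD D).
Proof.
have t0 := @ext_total (pjoin set0).
have inD : forall k w, (forall v, k v != None) -> restr k (D w) \in ThD D.
  move=> k w tk; rewrite inE; apply/existsP; exists w; rewrite dom_restr //.
  by apply/subsetP => v _; rewrite inDom tk.
have hE : EOf (ThD D) = setT.
  apply/setP => w; rewrite in_setT; apply/bigcupP.
  exists (restr (ext (pjoin set0)) (D w)); first exact: inD.
  by rewrite inDom restr_at.
have hI : forall w, IOf (ThD D) w = setT.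
  move=> w; apply/setP => x; rewrite in_setT inE.
  have tt := upd_total x t0.
  apply/existsP; exists (restr (upd (ext (pjoin set0)) x) (D w)).
  by rewrite inD //= restr_at // upd_at.
split.
  move=> F sF cF; rewrite inE => /existsP [w /eqP dj].
  have : pjoin F w != None by rewrite -inDom dj.
  case/pjoinP => f fF /andP[fw _].
  move: (subsetP sF f fF); rewrite inE => /existsP [w' /eqP df].
  have fle := compat_le cF fF.
  have sDw : D w \subset D w' by apply: D2; rewrite -df inDom.
  suff -> : pjoin F = f by [].
  symmetry; apply: (le_eq fle) => v; rewrite -!inDom dj df; exact: (subsetP sDw).
split; last by split.
split.
  apply: FC => // t tt.
  set G := (fun w => restr t (D w)) @: [set: E].
  have e : pjoin G = t.
    apply: pjoin_eq => [g /imsetP [w _ ->]|w _]; first exact: restr_le.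
    by exists (restr t (D w)); [apply/imsetP; exists w; rewrite ?in_setT | rewrite restr_at ?tt ?D1].
  rewrite -e; apply: ExtI.
  - by apply/subsetP => g /imsetP [w _ ->]; exact: inD.
  - by apply/set0Pn; exists (restr t (D y)); apply/imsetP; exists y.
  - by apply: (@le_compat _ t) => g /imsetP [w _ ->]; exact: restr_le.
move=> h; rewrite inE => /existsP [w /eqP dh].
suff -> : tips (ThD D) h = [set w] by rewrite cards1.
apply/setP => v; rewrite in_setD in_set1.
case: (v =P w) => [->|nvw].
- rewrite dh D1 andbT; apply/bigcupP => [[k /andP[kE klt] kw]].
  have [w' /andP[ww' sw']] := ExtD_dom kE kw.
  case/ExtE: kE => G [sG _ cG] ek.
  move: kw; rewrite inDom ek => /pjoinP [g gG /andP[gw _]].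
  move: (subsetP sG g gG); rewrite inE => /existsP [w'' /eqP dg].
  have gk : pf_le g k by rewrite ek; apply: compat_le.
  have gh : pf_le g h by move: klt => /andP[kh _]; exact: pf_le_trans gk kh.
  have ww'' : w \in D w'' by rewrite -dg inDom.
  have egh : g = h.
    apply: (le_eq gh) => u; rewrite -!inDom dh dg => uw.
    exact: (subsetP (D2 ww'')).
  rewrite egh in gk.
  by case/andP: klt => kh; rewrite (pf_le_anti kh gk) eqxx.
- case: (boolP (v \in dom h)) => vh; last by rewrite andbF.
  rewrite andbT; apply: negbF.
  have vD : v \in D w by rewrite -dh.
  have sv : D v \subset dom h by rewrite dh; exact: D2.
  apply/bigcupP; exists (restr h (D v)); last by rewrite inDom restr_at // -inDom.
  rewrite ExtS; last by rewrite inE; apply/existsP; exists v; rewrite dom_restr.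
  rewrite /pf_lt restr_le /=; apply/eqP => e.
  have : dom (restr h (D v)) = D w by rewrite e.
  rewrite dom_restr // => edv.
  by apply: nvw; symmetry; apply: (D3 vD); rewrite edv.
Qed.

End DD.
Definition Dp (a b : E) (w : E) : {set E} := if w == b then [set a; b] else [set w].

Section Dprops.
Variables (a b : E).
Hypothesis ab : a != b.

Lemma Dp1 w : w \in Dp a b w.
Proof. by rewrite /Dp; case: eqP => [->|_]; rewrite !inE eqxx ?orbT. Qed.

Lemma Dp2 w w' : w' \in Dp a b w -> Dp a b w' \subset Dp a b w.
Proof.
rewrite {1}/Dp; case: (w =P b) => [->|nw].
  rewrite !inE => /orP[/eqP->|/eqP->].
    by rewrite /Dp (negbTE ab) eqxx; apply/subsetP => x; rewrite !inE => ->.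
  by rewrite subxx.
by rewrite inE => /eqP ->; rewrite subxx.
Qed.

Lemma Dp3 w w' : w' \in Dp a b w -> w \in Dp a b w' -> w = w'.
Proof.
rewrite /Dp; case: (w =P b) => [->|nw]; case: (w' =P b) => [->|nw'] //.
- by move=> _; rewrite inE => /eqP ->.
- by rewrite inE => /eqP ->.
- by rewrite inE => /eqP ->.
Qed.
End Dprops.

Lemma DpE a b w (S : {set E}) : b \in Dp a b w -> Dp a b w \subset S -> [set a; b] \subset S.
Proof.
rewrite /Dp; case: (w =P b) => // nw; rewrite inE => /eqP e.
by rewrite e in nw.
Qed.

Lemma join_fail a b : a != b -> ~ CC (sjoin (ThD (Dp a b)) (ThD (Dp b a))).
Proof.
move=> ab; rewrite /sjoin.
set W := Ext (ThD (Dp a b)) :&: Ext (ThD (Dp b a)).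
set h := restr (ext (pjoin set0)) [set a; b].
have dh : dom h = [set a; b].
  by apply: dom_restr; apply/subsetP => v _; rewrite inDom ext_total.
have key : forall g, g \in W -> pf_le g h -> (a \in dom g) || (b \in dom g) -> g = h.
  move=> g; rewrite inE => /andP[g1 g2] gh gab.
  have sab : [set a; b] \subset dom g.
    case/orP: gab => [ga|gb].
      have [w /andP[aw sw]] := ExtD_dom g2 ga.
      by rewrite setUC; apply: DpE aw sw.
    have [w /andP[bw sw]] := ExtD_dom g1 gb.
    by apply: DpE bw sw.
  apply: (le_eq gh) => v; rewrite -!inDom dh; exact: (subsetP sab).
have PW : Prime W \subset W by apply/subsetP => p /PrimeP[].
have hP : h \in Prime W.
  apply/PrimeP; split.
    rewrite inE !ExtS // inE; apply/existsP.
      by exists a; rewrite dh /Dp (eqxx a) setUC.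
    by exists b; rewrite dh /Dp (eqxx b).
  move=> F sF cF eh.
  have : pjoin F a != None by rewrite -eh -inDom dh !inE eqxx.
  case/pjoinP => f fF /andP[fa _].
  have ef : f = h.
    apply: key; first exact: (subsetP sF).
      by rewrite eh; apply: compat_le.
    by rewrite inDom fa.
  by rewrite -ef.
have sT : [set a; b] \subset tips (Prime W) h.
  apply/subsetP => v vab.
  rewrite in_setD dh vab andbT; apply/bigcupP => [[k /andP[kE klt] kv]].
  case/ExtE: kE => G [sG _ cG] ek.
  move: kv; rewrite inDom ek => /pjoinP [g gG /andP[gv _]].
  have gk : pf_le g k by rewrite ek; apply: compat_le.
  have gh : pf_le g h by move: klt => /andP[kh _]; exact: pf_le_trans gk kh.
  have egh : g = h.
    apply: key => //; first exact: (subsetP PW _ (subsetP sG g gG)).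
    by move: vab; rewrite !inE => /orP[/eqP e|/eqP e]; rewrite -e ?gv ?orbT.
  rewrite egh in gk.
  by case/andP: klt => kh; rewrite (pf_le_anti kh gk) eqxx.
case=> _ [[_ tp] _].
have := subset_leq_card sT; rewrite cards2 ab (tp h hP).
by [].
Qed.

End Proof.

Theorem proposition20 (E : finType) (I : E -> finType)
  (HI : forall w : E, 0 < #|I w|) :
  (forall Th Th' : {set pfun I}, CC Th -> CC Th' -> CC (smeet Th Th')) /\
  (1 < #|E| -> exists Th Th' : {set pfun I},
      CC Th /\ CC Th' /\ ~ CC (sjoin Th Th')).
Proof.
have d : forall w, I w.
  move=> w; case: (pickP (@predT (I w))) => [x _|H]; first exact: x.
  by exfalso; case/card_gt0P: (HI w) => x _; have := H x.
split; first by move=> Th Th'; apply: meet_CC.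
case/card_gt1P => a [b [_ _ ab]].
exists (ThD I (Dp a b)), (ThD I (Dp b a)); split; last split.
- exact: (CC_D d (@Dp1 _ a b) (@Dp2 _ a b ab) (@Dp3 _ a b) a).
- by rewrite eq_sym in ab; exact: (CC_D d (@Dp1 _ b a) (@Dp2 _ b a ab) (@Dp3 _ b a) a).
- exact: join_fail.
Qed.
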